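(* Let $(\vartheta_n)_{n\ge0}$ be a submartingale with $\vartheta_n\in[0,1]$ for all $n$, and let $\vartheta_\infty$ be its almost sure limit. Let $S=\{0,1\}$ and let $\xi_n$ be the random probability measure on $S$ with $\xi_n(\{1\})=\vartheta_n$, $\xi_n(\{0\})=1-\vartheta_n$. If $\boldsymbol X=(X_0,X_1,\dots)$ is a sequence of $S$-valued random variables having $\boldsymbol\xi=(\xi_0,\xi_1,\dots)$ as a product disintegration, then \[ \lim_{n\to\infty}\frac1n\sum_{i=0}^{n-1}\mathbb 1_{\{X_i=1\}}=\vartheta_\infty\quad\text{almost surely.} \]
   Context: A sequence $\boldsymbol\xi$ of random probability measures on $S$ is a product disintegration of $\boldsymbol X$ if, with probability one, $\mathbb{P}[X_0\in A_0,\dots,X_n\in A_n\mid \boldsymbol{\xi}] = \xi_0(A_0)\cdots\xi_n(A_n)$ holds simultaneously for every $n\ge 0$ and all subsets $A_0,\dots,A_n$ of $S$ (conditioning on $\sigma(\boldsymbol\xi)$). *)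

(* Defs.v *)
From HB Require Import structures.
From mathcomp Require Import all_boot all_order all_algebra.
From mathcomp Require Import all_classical all_reals all_analysis.
Set Implicit Arguments. Unset Strict Implicit. Unset Printing Implicit Defensive.
Import Order.TTheory GRing.Theory Num.Theory.
Import numFieldNormedType.Exports.
Local Open Scope classical_set_scope.
Local Open Scope ring_scope.

Section Defs.
Context (d : measure_display) (T : measurableType d) (R : realType).

Definition filtration (F : nat -> set (set T)) : Prop :=
  (forall n, sigma_algebra setT (F n)) /\
  (forall n, F n `<=` measurable) /\
  (forall n, F n `<=` F n.+1).

(* theta is a submartingale w.r.t. the filtration F (integrable, adapted, and
   E[theta_{n+1} | F_n] >= theta_n, i.e. the defining integral inequality on
   every F_n-set). *)
Definition submartingale (P : probability T R) (F : nat -> set (set T))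
  (theta : nat -> T -> R) : Prop :=
  filtration F /\
  (forall n, P.-integrable setT (fun w => (theta n w)%:E)) /\
  (forall n (B : set R), measurable B -> F n (theta n @^-1` B)) /\
  (forall n A, F n A ->
     (\int[P]_(w in A) (theta n w)%:E <= \int[P]_(w in A) (theta n.+1 w)%:E)%E).

(* A random probability measure on the finite set S is given by its random mass
   function xi n w : S -> R; xi n w (A) = \sum_(s in A) xi n w s. *)
Definition rmeas (S : finType) (p : S -> R) (A : {set S}) : R :=
  \sum_(s in A) p s.

Definition sigma_of (S : finType) (xi : nat -> T -> S -> R) : set (set T) :=
  smallest (sigma_algebra setT)
    [set E | exists n (A : {set S}) (B : set R),
       measurable B /\ E = (fun w => rmeas (xi n w) A) @^-1` B].

(* xi is a product disintegration of X: for all n, all A_0..A_n subsets of S,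
   P[X_0 in A_0, ..., X_n in A_n | sigma(xi)] = xi_0(A_0) ... xi_n(A_n) a.s.,
   expressed through the defining property of conditional probability. *)
Definition product_disintegration (S : finType) (P : probability T R)
  (X : nat -> T -> S) (xi : nat -> T -> S -> R) : Prop :=
  forall n (A : nat -> {set S}) (B : set T), sigma_of xi B ->
    P (B `&` [set w | forall i, (i <= n)%N -> X i w \in A i]) =
    (\int[P]_(w in B) (\prod_(i < n.+1) rmeas (xi i w) (A i))%:E)%E.

End Defs.

(* Main.v *)
Require Import Defs.
From HB Require Import structures.
From mathcomp Require Import all_boot all_order all_algebra.
From mathcomp Require Import all_classical all_reals all_analysis.
From mathcomp Require Import measurable_realfun zify ring lra.
Import Order.TTheory GRing.Theory Num.Theory.
Import numFieldNormedType.Exports.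
Local Open Scope classical_set_scope.
Local Open Scope ring_scope.

Set Implicit Arguments. Unset Strict Implicit. Unset Printing Implicit Defensive.

Section Ecalc.
Context (d : measure_display) (T : measurableType d) (R : realType)
  (P : probability T R).

Definition good (f : T -> R) :=
  measurable_fun setT f /\ exists M : R, forall w, `|f w| <= M.

Definition E (f : T -> R) : R := fine (\int[P]_w (f w)%:E)%E.

Lemma good_int f : good f -> P.-integrable setT (EFin \o f).
Proof.
move=> [mf [M hM]]; apply: measurable_bounded_integrable => //.
  exact: (le_lt_trans (probability_le1 P measurableT) (ltry 1)).
exists M; split; first exact: num_real.
by move=> x Mx y _; apply: le_trans (hM y) (ltW Mx).
Qed.

Lemma EE f : good f -> (\int[P]_w (f w)%:E)%E = (E f)%:E.
Proof.
by move=> gf; rewrite /E fineK// (integrable_fin_num _ (good_int gf)).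
Qed.

Lemma goodD f g : good f -> good g -> good (fun w => f w + g w).
Proof.
move=> [mf [M hM]] [mg [N hN]]; split; first exact: measurable_funD.
by exists (M + N) => w; rewrite (le_trans (ler_normD _ _))// lerD.
Qed.

Lemma goodN f : good f -> good (fun w => - f w).
Proof.
move=> [mf [M hM]]; split; first exact: measurable_funN.
by exists M => w; rewrite normrN.
Qed.

Lemma goodB f g : good f -> good g -> good (fun w => f w - g w).
Proof. by move=> gf gg; apply: goodD => //; apply: goodN. Qed.

Lemma goodM f g : good f -> good g -> good (fun w => f w * g w).
Proof.
move=> [mf [M hM]] [mg [N hN]]; split; first exact: measurable_funM.
exists (M * N) => w; rewrite normrM ler_pM//.
Qed.

Lemma goodC c : good (fun _ => c).
Proof. by split; [exact: measurable_cst | exists `|c|]. Qed.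

Lemma good_sum I (s : seq I) (h : I -> T -> R) :
  (forall i, good (h i)) -> good (fun w => \sum_(i <- s) h i w).
Proof.
move=> gh; elim: s => [|a s IH].
  by under eq_fun do rewrite big_nil; exact: goodC.
by under eq_fun do rewrite big_cons; apply: goodD.
Qed.

Lemma good_indic (A : set T) : measurable A -> good (\1_A).
Proof.
move=> mA; split; first exact: measurable_indic.
by exists 1 => w; rewrite indicE; case: (w \in A) => /=; rewrite ?normr1 ?normr0.
Qed.

Lemma ED f g : good f -> good g -> E (fun w => f w + g w) = E f + E g.
Proof.
move=> gf gg; apply: EFin_inj; rewrite -EE; last exact: goodD.
rewrite EFinD -!EE//.
exact: (integralD_EFin measurableT (good_int gf) (good_int gg)).
Qed.

Lemma EZ k f : good f -> E (fun w => k * f w) = k * E f.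
Proof.
move=> gf; apply: EFin_inj; rewrite -EE; last exact: goodM (goodC _) gf.
rewrite EFinM -EE//.
under eq_integral do rewrite EFinM.
exact: (integralZl measurableT (good_int gf)).
Qed.

Lemma EN f : good f -> E (fun w => - f w) = - E f.
Proof.
move=> gf; rewrite -mulN1r -(EZ (-1) gf).
by congr E; apply: funext => w; rewrite mulN1r.
Qed.

Lemma EB f g : good f -> good g -> E (fun w => f w - g w) = E f - E g.
Proof. by move=> gf gg; rewrite ED ?EN//; apply: goodN. Qed.

Lemma EC c : E (fun _ => c) = c.
Proof.
by have := expectation_cst P c; rewrite unlock /E => ->.
Qed.

Lemma Esum I (s : seq I) (h : I -> T -> R) :
  (forall i, good (h i)) -> E (fun w => \sum_(i <- s) h i w) = \sum_(i <- s) E (h i).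
Proof.
move=> gh; elim: s => [|a s IH].
  by rewrite big_nil; under eq_fun do rewrite big_nil; rewrite EC.
rewrite big_cons -IH -ED//; last exact: good_sum.
by congr E; apply: funext => w; rewrite big_cons.
Qed.

Lemma Ele f g : good f -> good g -> (forall w, f w <= g w) -> E f <= E g.
Proof.
move=> gf gg fg; rewrite -lee_fin -!EE//.
apply: le_integral => //; [exact: good_int|exact: good_int|].
by move=> w _; rewrite lee_fin.
Qed.

Lemma Eext f g : f =1 g -> E f = E g.
Proof. by move=> fg; congr E; apply: funext. Qed.

Lemma E_indic (A : set T) : measurable A -> (E (\1_A))%:E = P A.
Proof.
move=> mA; rewrite -EE; last exact: good_indic.
by rewrite integral_indic// setIT.
Qed.

Lemma int_restrict (B : set T) f : measurable B -> good f ->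
  (\int[P]_(w in B) (f w)%:E)%E = (E (fun w => \1_B w * f w))%:E.
Proof.
move=> mB gf; rewrite -EE; last exact: goodM (good_indic mB) gf.
rewrite integral_mkcond; apply: eq_integral => w _.
rewrite /patch indicE; case: (w \in B) => /=; by rewrite ?mul1r ?mul0r.
Qed.

End Ecalc.

Lemma sum_lt (R : realType) K k : \sum_(m < K) (((m < k)%N)%:R : R) = (minn K k)%:R.
Proof.
elim: K => [|K IH]; first by rewrite big_ord0 min0n.
rewrite big_ord_recr /= IH -natrD; congr (_%:R).
case: (ltnP K k) => h /=; lia.
Qed.

Lemma small_eq0 (R : realType) (a : R) : (forall K : nat, (0 < K)%N -> `|a| <= K%:R^-1) -> a = 0.
Proof.
move=> h; apply/eqP; apply: contraT => a0.
have b0 : 0 < `|a| by rewrite normr_gt0.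
pose K := (Num.truncn (`|a|^-1)).+1.
have hK : `|a|^-1 < K%:R by rewrite /K Num.Theory.truncnS_gt.
have c0 : 0 < K%:R :> R by rewrite ltr0n.
have h1 : `|a| * K%:R <= 1.
  by have := h K isT; rewrite -(ler_pM2r c0) mulVf // lt0r_neq0.
have h2 : 1 < `|a| * K%:R.
  by rewrite -(ltr_pM2l b0) mulfV ?lt0r_neq0 in hK.
by move: (lt_le_trans h2 h1); rewrite ltxx.
Qed.

Section approx.
Context (d : measure_display) (T : measurableType d) (R : realType)
  (P : probability T R).
Variables f1 f2 g : T -> R.
Hypotheses (gf1 : good f1) (gf2 : good f2) (gg : good g).
Hypotheses (f1b : forall w, 0 <= f1 w <= 1) (f2b : forall w, 0 <= f2 w <= 1)
  (gb : forall w, 0 <= g w <= 1).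
Let Lc (c : R) := [set w | c <= g w].
Hypothesis Hlev : forall c, measurable (Lc c) /\
  E P (fun w => \1_(Lc c) w * f1 w) = E P (fun w => \1_(Lc c) w * f2 w).

Let gK (K : nat) w : R := \sum_(m < K) (K%:R : R)^-1 * \1_(Lc (m.+1%:R / K%:R)) w.

Let gK_eq K w : (0 < K)%N -> gK K w = K%:R^-1 * (Num.truncn (K%:R * g w))%:R.
Proof.
move=> K0; have c0 : 0 < K%:R :> R by rewrite ltr0n.
rewrite /gK -mulr_sumr; congr (_ * _).
have -> : \sum_(m < K) \1_(Lc (m.+1%:R / K%:R)) w =
          \sum_(m < K) (((m < Num.truncn (K%:R * g w))%N)%:R : R).
  apply: eq_bigr => m _; rewrite indicE; congr (_%:R).
  rewrite Num.Theory.truncn_gt_nat.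
  rewrite -ler_pdivrMl //; rewrite /Lc.
  congr nat_of_bool.
  apply/idP/idP => h; first by move/set_mem: h; rewrite mulrC.
  by apply/mem_set; rewrite /= mulrC.
rewrite sum_lt; congr (_%:R); apply/minn_idPr.
have /andP[g0 g1] := gb w.
rewrite -[X in (_ <= X)%N](@Num.Theory.natrK R K).
apply: Num.Theory.le_truncn.
by rewrite -[X in _ <= X]mulr1 ler_wpM2l // ltW.
Qed.

Let gK_bnd K w : (0 < K)%N -> 0 <= g w - gK K w <= K%:R^-1.
Proof.
move=> K0; have c0 : 0 < K%:R :> R by rewrite ltr0n.
rewrite gK_eq //.
have /andP[g0 g1] := gb w.
have x0 : 0 <= K%:R * g w by rewrite mulr_ge0 // ltW.
have /andP[h1 h2] := Num.Theory.truncn_itv x0.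
have gE : g w = K%:R^-1 * (K%:R * g w) by rewrite mulrA mulVf ?lt0r_neq0 // mul1r.
set k := Num.truncn _ in h1 h2 *.
set x := K%:R * g w in h1 h2 gE *.
have i0 : 0 < K%:R^-1 :> R by rewrite invr_gt0.
rewrite gE -mulrBr; apply/andP; split.
  by rewrite mulr_ge0 ?subr_ge0 // ltW.
rewrite -[X in _ <= X]mulr1 ler_wpM2l ?ltW //.
by move: h2; rewrite -natr1; lra.
Qed.

Let gKgood K : good (gK K).
Proof.
apply: good_sum => m; apply: goodM; first exact: goodC.
exact: good_indic (Hlev _).1.
Qed.

Let EgK K f : good f ->
  E P (fun w => gK K w * f w) =
  \sum_(m < K) K%:R^-1 * E P (fun w => \1_(Lc (m.+1%:R / K%:R)) w * f w).
Proof.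
move=> gf.
rewrite (@Eext _ _ _ P _ (fun w => \sum_(m < K) K%:R^-1 *
    (\1_(Lc (m.+1%:R / K%:R)) w * f w))); last first.
  by move=> w; rewrite /gK mulr_suml; apply: eq_bigr => m _; rewrite mulrA.
rewrite Esum; last first.
  by move=> m; apply: goodM; [exact: goodC|apply: goodM => //; exact: good_indic (Hlev _).1].
apply: eq_bigr => m _; rewrite EZ //.
by apply: goodM => //; exact: good_indic (Hlev _).1.
Qed.

Let diff_bnd K f : (0 < K)%N -> good f -> (forall w, 0 <= f w <= 1) ->
  0 <= E P (fun w => g w * f w) - E P (fun w => gK K w * f w) <= K%:R^-1.
Proof.
move=> K0 gf fb.
rewrite -EB; [|exact: goodM|exact: goodM].
have h w : 0 <= g w * f w - gK K w * f w <= K%:R^-1.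
  rewrite -mulrBl; have /andP[? ?] := gK_bnd w K0; have /andP[? ?] := fb w.
  apply/andP; split; first by rewrite mulr_ge0.
  by nra.
have gd : good (fun w => g w * f w - gK K w * f w) by apply: goodB; apply: goodM.
apply/andP; split.
  by rewrite -(EC P 0); apply: Ele => //; [exact: goodC|move=> w; case/andP: (h w)].
by rewrite -(EC P K%:R^-1); apply: Ele => //; [exact: goodC|move=> w; case/andP: (h w)].
Qed.

Lemma approx_eq : E P (fun w => g w * f1 w) = E P (fun w => g w * f2 w).
Proof.
apply/eqP; rewrite -subr_eq0; apply/eqP; apply: small_eq0 => K K0.
have e : E P (fun w => gK K w * f1 w) = E P (fun w => gK K w * f2 w).
  by rewrite !EgK //; apply: eq_bigr => m _; rewrite (Hlev _).2.
have /andP[a1 a2] := diff_bnd K0 gf1 f1b.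
have /andP[b1 b2] := diff_bnd K0 gf2 f2b.
rewrite e in a1 a2.
rewrite ler_norml; apply/andP; split; lra.
Qed.

End approx.

Lemma sqrt_ex n : exists r, (r ^ 2 <= n < r.+1 ^ 2)%N.
Proof.
elim: n => [|n [r /andP[h1 h2]]]; first by exists 0%N.
case: (ltnP n.+1 (r.+1 ^ 2)) => h3.
  by exists r; rewrite h3 (leq_trans h1).
exists r.+1; apply/andP; split => //.
have e : n.+1 = (r.+1 ^ 2)%N by apply/eqP; rewrite eqn_leq h3 h2.
rewrite e; nia.
Qed.

Lemma avg_bnd (R : realType) (y : nat -> R) n r m : (forall i, `|y i| <= 1) ->
  (r ^ 2 <= n < r.+1 ^ 2)%N -> (0 < r)%N ->
  `|\sum_(i < r ^ 2) y i| <= (r ^ 2)%:R / m.+1%:R ->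
  `|n%:R^-1 * \sum_(i < n) y i| <= m.+1%:R^-1 + 2 / r%:R.
Proof.
move=> yb /andP[h1 h2] r0 hS.
have -> : \sum_(i < n) y i = \sum_(i < r ^ 2) y i + \sum_(r ^ 2 <= i < n) y i.
  by rewrite -!(big_mkord xpredT) (@big_cat_nat _ _ _ (r ^ 2)) // big_mkord.
have h3 : `|\sum_(r ^ 2 <= i < n) y i| <= 2 * r%:R.
  apply: (le_trans (ler_norm_sum _ _ _)).
  apply: (@le_trans _ _ (\sum_(r ^ 2 <= i < n) (1:R))); first by apply: ler_sum => i _.
  rewrite sumr_const_nat -natrM ler_nat; nia.
have n0 : 0 < n%:R :> R by rewrite ltr0n; apply: leq_trans h1; rewrite expn_gt0 r0.
have rr0 : 0 < r%:R :> R by rewrite ltr0n.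
have M0 : 0 < m.+1%:R :> R by rewrite ltr0n.
have ni : 0 <= n%:R^-1 :> R by rewrite invr_ge0 ltW.
rewrite normrM (ger0_norm ni) mulrC ler_pdivrMr //.
apply: (le_trans (ler_normD _ _)); apply: (le_trans (lerD hS h3)).
have hn : (r ^ 2)%:R <= n%:R :> R by rewrite ler_nat.
rewrite natrX in hn *.
rewrite [X in _ <= X]mulrDl; apply: lerD.
  by rewrite [_ * n%:R]mulrC ler_pM2r // invr_gt0.
rewrite -mulrA ler_pM2l // mulrC ler_pdivlMr //.
Qed.


Lemma inv_small (R : realType) (e : R) : 0 < e -> exists m : nat, m.+1%:R^-1 < e.
Proof.
move=> e0; exists (Num.truncn (e^-1)).
have h := Num.Theory.truncnS_gt (e^-1).
rewrite -[X in _ < X]invrK ltf_pV2 ?posrE ?invr_gt0 ?ltr0n //.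
Qed.

Lemma det_avg (R : realType) (y : nat -> R) : (forall i, `|y i| <= 1) ->
  (forall m : nat, exists K : nat, forall k : nat, (K <= k)%N ->
     `|\sum_(i < k ^ 2) y i| <= (k ^ 2)%:R / m.+1%:R) ->
  (fun n : nat => n%:R^-1 * \sum_(i < n) y i) @ \oo --> 0.
Proof.
move=> yb H; apply/cvgr0Pnorm_lt => e e0.
have e2 : 0 < e / 2 by rewrite divr_gt0.
have e4 : 0 < e / 4 by rewrite divr_gt0.
have [m hm] := inv_small e2.
have [K hK] := H m.
have [R0 hR0] := inv_small e4.
have [M0 [hM1 hM2]] : exists M0, (K <= M0 /\ R0.+1 <= M0)%N.
  by exists (maxn K R0.+1); rewrite leq_maxl leq_maxr.
exists (M0 ^ 2)%N => // n /= hn.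
have [r hr] := sqrt_ex n.
have rM : (M0 <= r)%N.
  case/andP: hr => _ hr; rewrite leqNgt; apply/negP => rM.
  have : (M0 ^ 2 < r.+1 ^ 2)%N by apply: leq_ltn_trans hn hr.
  rewrite ltn_exp2r //; lia.
have r0 : (0 < r)%N by lia.
apply: (le_lt_trans (@avg_bnd R y n r m yb hr r0 (hK r (leq_trans hM1 rM)))).
have rr : R0.+1%:R <= r%:R :> R by rewrite ler_nat; lia.
have h2 : 2 / r%:R <= 2 / R0.+1%:R :> R.
  by rewrite ler_pM2l // lef_pV2 ?posrE ?ltr0n.
have h3 : 2 / R0.+1%:R < e / 2 :> R.
  have : 2 * R0.+1%:R^-1 < 2 * (e / 4) :> R by rewrite ltr_pM2l.
  by rewrite (_ : 2 * (e / 4) = e / 2) //; field.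
have -> : e = e / 2 + e / 2 by field.
by apply: ltrD => //; apply: le_lt_trans h2 h3.
Qed.

Lemma sum_inv_sq (R : realType) n :
  \sum_(0 <= i < n) (i.+1%:R ^+ 2 : R)^-1 <= 2 - 2 / n.+1%:R.
Proof.
elim: n => [|n IH]; first by rewrite big_geq // divr1 subrr.
rewrite big_nat_recr //=.
apply: (le_trans (lerD IH (lexx _))).
have a0 : 0 < n.+1%:R :> R by rewrite ltr0n.
have -> : n.+2%:R = n.+1%:R + 1 :> R by rewrite -natr1.
set a := n.+1%:R in a0 *.
have a1 : 1 <= a by rewrite /a ler1n.
rewrite -subr_ge0.
have -> : 2 - 2 / (a + 1) - (2 - 2 / a + (a ^+ 2)^-1) = (a - 1) / (a ^+ 2 * (a + 1)).
  by field; apply/andP; split; rewrite ?lt0r_neq0 // ltr_wpDr.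
by rewrite divr_ge0 ?subr_ge0 // mulr_ge0 // ?exprn_ge0 ?addr_ge0 // ltW.
Qed.

Lemma series_inv_sq (R : realType) (c : R) (u : nat -> \bar R) : 0 <= c ->
  (forall k, (0 <= u k <= (c / (k.+1%:R ^+ 2))%:E)%E) -> (\sum_(k <oo) u k < +oo)%E.
Proof.
move=> c0 hu; apply: (@le_lt_trans _ _ (2 * c)%:E); last exact: ltry.
apply: lime_le.
  by apply: is_cvg_nneseries => k _ _; case/andP: (hu k).
apply: nearW => n.
apply: (@le_trans _ _ (\sum_(0 <= i < n) (c / (i.+1%:R ^+ 2))%:E)%E).
  by apply: lee_sum => i _; case/andP: (hu i).
rewrite sumEFin lee_fin -mulr_sumr mulrC ler_wpM2r //.
apply: (le_trans (sum_inv_sq R n)).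
by rewrite lerBlDr lerDl divr_ge0.
Qed.

Section Main.
Context (d : measure_display) (T : measurableType d) (R : realType)
  (P : probability T R) (F : nat -> set (set T))
  (theta : nat -> T -> R) (theta_inf : T -> R) (X : nat -> T -> bool).
Hypothesis Hsub : submartingale P F theta.
Hypothesis Hb : forall n w, 0 <= theta n w <= 1.
Hypothesis HX : forall n (b : bool), measurable (X n @^-1` [set b]).

Definition xi := (fun n w (s : bool) => if s then theta n w else 1 - theta n w).
Hypothesis Hpd : product_disintegration P X xi.

Definition Z i w : R := ((X i w == true)%:R : R).

Lemma rmeas1 n w : rmeas (xi n w) [set true]%SET = theta n w.
Proof. by rewrite /rmeas big_set1. Qed.

Lemma rmeasT n w : rmeas (xi n w) [set: bool]%SET = 1.
Proof.
rewrite /rmeas (eq_bigl xpredT) ?big_bool; last by move=> s; rewrite finset.in_setT.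
by rewrite /xi /= addrC subrK.
Qed.

Lemma mtheta n : measurable_fun setT (theta n).
Proof.
case: Hsub => [[_ [HFm _]] [_ [Had _]]].
by move=> _ B mB; rewrite setTI; apply: HFm; apply: Had.
Qed.

Lemma gtheta n : good (theta n).
Proof.
split; first exact: mtheta.
by exists 1 => w; have /andP[h0 h1] := Hb n w; rewrite ger0_norm.
Qed.

Lemma Z_indic i : Z i = \1_(X i @^-1` [set true]).
Proof.
apply: funext => w; rewrite /Z indicE.
case h: (X i w); first by rewrite mem_set.
by rewrite memNset //= h.
Qed.

Lemma gZ i : good (Z i).
Proof. by rewrite Z_indic; apply: good_indic. Qed.

Lemma sigma_meas B : sigma_of xi B -> measurable B.
Proof.
apply: smallest_sub; first exact: sigma_algebra_measurable.
move=> _ [n [A [C [mC ->]]]].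
have -> : (fun w => rmeas (xi n w) A) @^-1` C =
   setT `&` ((fun w => rmeas (xi n w) A) @^-1` C) by rewrite setTI.
have mf : measurable_fun setT (fun w => rmeas (xi n w) A).
  rewrite /rmeas (_ : (fun w => _) = fun w => \sum_(s <- index_enum bool)
     (if s \in A then xi n w s else 0)); last first.
    by apply: funext => w; rewrite big_mkcond.
  apply: measurable_sum => s; case: (s \in A); last exact: measurable_cst.
  rewrite /xi; case: s; first exact: mtheta.
  by apply: measurable_funB => //; exact: mtheta.
exact: mf.
Qed.

Lemma K0 B j : sigma_of xi B ->
  E P (fun w => \1_B w * Z j w) = E P (fun w => \1_B w * theta j w).
Proof.
move=> sB; have mB := sigma_meas sB.
pose A := fun l => if l == j then [set true]%SET else [set: bool]%SET.
have := Hpd j A sB.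
have -> : [set w | forall i, (i <= j)%N -> X i w \in A i] = X j @^-1` [set true].
  apply/seteqP; split => w /=.
    by move=> /(_ j (leqnn j)); rewrite /A eqxx finset.in_set1 => /eqP.
  move=> Xw i ij; rewrite /A; case: eqP => [->|_]; last by rewrite finset.in_setT.
  by rewrite finset.in_set1 Xw.
rewrite int_restrict //; last first.
  apply: (eq_ind (fun w => theta j w)) => //; first exact: gtheta.
  apply: funext => w; rewrite big_ord_recr /= /A eqxx rmeas1 big1 ?mul1r//.
  move=> i _; have : (i : nat) != j by rewrite neq_ltn ltn_ord.
  by move/negbTE => ->; rewrite rmeasT.
have -> : (fun w => \1_B w * (\prod_(i < j.+1) rmeas (xi i w) (A i))) =
          (fun w => \1_B w * theta j w).
  apply: funext => w; congr (_ * _).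
  rewrite big_ord_recr /= /A eqxx rmeas1 big1 ?mul1r//.
  move=> i _; have : (i : nat) != j by rewrite neq_ltn ltn_ord.
  by move/negbTE => ->; rewrite rmeasT.
rewrite -(@E_indic _ _ _ P (B `&` X j @^-1` [set true])); last exact: measurableI.
move=> h; have h2 := EFin_inj h; rewrite -h2; apply: Eext => w.
rewrite Z_indic !indicE; rewrite in_setI.
by case: (w \in B); case: (w \in X j @^-1` _); rewrite /= ?mul1r ?mul0r.
Qed.


Lemma prod_single m i w (A : nat -> {set bool}) : (i < m)%N ->
  (forall l, (l < m)%N -> l != i -> A l = [set: bool]%SET) -> A i = [set true]%SET ->
  \prod_(l < m) rmeas (xi l w) (A l) = theta i w.
Proof.
move=> im HA HAi; rewrite (bigD1 (Ordinal im)) //= HAi rmeas1 big1 ?mulr1 //.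
move=> l hl; rewrite HA ?rmeasT //.
Qed.

Lemma sigmaT : sigma_of xi setT.
Proof. by move=> Y [[Y0 YD _] _]; have := YD _ Y0; rewrite setD0. Qed.

Lemma K1 i j : (i < j)%N ->
  E P (fun w => Z i w * Z j w) = E P (fun w => theta i w * theta j w).
Proof.
move=> ij.
pose A := fun l => if (l == i) || (l == j) then [set true]%SET else [set: bool]%SET.
have := Hpd j A sigmaT.
have -> : [set w | forall l, (l <= j)%N -> X l w \in A l] =
    X i @^-1` [set true] `&` X j @^-1` [set true].
  apply/seteqP; split => w /=.
    move=> h; split.
      by move: (h i (ltnW ij)); rewrite /A eqxx finset.in_set1 => /eqP.
    by move: (h j (leqnn j)); rewrite /A eqxx orbT finset.in_set1 => /eqP.
  move=> [Xi Xj] l lj; rewrite /A.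
  case: eqP => [->|_] /=; first by rewrite finset.in_set1 Xi.
  case: eqP => [->|_] /=; first by rewrite finset.in_set1 Xj.
  by rewrite finset.in_setT.
have -> : (fun w => (\prod_(l < j.+1) rmeas (xi l w) (A l))%:E) =
          (fun w => (theta i w * theta j w)%:E).
  apply: funext => w; congr EFin.
  rewrite big_ord_recr /= /A eqxx orbT rmeas1.
  rewrite (@prod_single j i w (fun l => A l)) //.
  - move=> l lj /negbTE li; rewrite /A li /=; case: eqP => // ljj.
    by move: lj; rewrite ljj ltnn.
  - by rewrite /A eqxx.
rewrite setTI EE; last exact: goodM (gtheta i) (gtheta j).
rewrite -(@E_indic _ _ _ P (X i @^-1` [set true] `&` X j @^-1` [set true])); last exact: measurableI.
move=> h; have h2 := EFin_inj h; rewrite -h2; apply: Eext => w.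
rewrite !Z_indic !indicE in_setI.
by case: (w \in X i @^-1` _); case: (w \in X j @^-1` _); rewrite /= ?mul1r ?mul0r.
Qed.


Lemma level_sigma k c : sigma_of xi [set w | c <= theta k w].
Proof.
apply: sub_gen_smallest; exists k, [set true]%SET, [set x | c <= x]; split.
  have -> : [set x : R | c <= x] = `[c, +oo[%classic.
    by apply/seteqP; split => x /=; rewrite in_itv /= andbT.
  exact: measurable_itv.
by apply/seteqP; split => w /=; rewrite rmeas1.
Qed.

Lemma Zb j w : 0 <= Z j w <= 1.
Proof. by rewrite /Z; case: (_ == _); rewrite /= ?lexx ?ler01. Qed.

Lemma K2 k j : E P (fun w => theta k w * Z j w) = E P (fun w => theta k w * theta j w).
Proof.
apply: approx_eq; [exact: gZ|exact: gtheta|exact: gtheta|exact: Zb|exact: Hb|exact: Hb|].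
move=> c; split; first exact: sigma_meas (level_sigma k c).
exact: K0 (level_sigma k c).
Qed.

Definition Y i w := Z i w - theta i w.

Lemma gY i : good (Y i).
Proof. by apply: goodB; [exact: gZ|exact: gtheta]. Qed.

Lemma EY i j : i != j -> E P (fun w => Y i w * Y j w) = 0.
Proof.
wlog ij : i j / (i < j)%N.
  move=> h; rewrite neq_ltn => /orP[ij|ji]; first by apply: h => //; rewrite neq_ltn ij.
  rewrite -(h j i ji); last by rewrite neq_ltn ji.
  by apply: Eext => w; rewrite mulrC.
move=> _.
rewrite (@Eext _ _ _ P _ (fun w => (Z i w * Z j w - theta j w * Z i w) -
   (theta i w * Z j w - theta i w * theta j w))); last first.
  by move=> w; rewrite /Y; ring.
have gZZ := goodM (gZ i) (gZ j).
have gTZ k l := goodM (gtheta k) (gZ l).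
have gTT k l := goodM (gtheta k) (gtheta l).
rewrite EB; [|by apply: goodB|by apply: goodB].
rewrite !EB // K1 // !K2 [E P (fun w => theta j w * theta i w)](@Eext _ _ _ P _ (fun w => theta i w * theta j w)); last first.
  by move=> w; rewrite mulrC.
by rewrite !subrr ?subr0.
Qed.


Lemma Yb i w : -1 <= Y i w <= 1.
Proof.
rewrite /Y; have /andP[? ?] := Zb i w; have /andP[? ?] := Hb i w.
apply/andP; split; lra.
Qed.

Lemma Esum_ord n (h : 'I_n -> T -> R) : (forall i, good (h i)) ->
  E P (fun w => \sum_(i < n) h i w) = \sum_(i < n) E P (h i).
Proof. by move=> gh; apply: Esum. Qed.

Lemma var_bound n : E P (fun w => (\sum_(i < n) Y i w) ^+ 2) <= n%:R.
Proof.
rewrite (@Eext _ _ _ P _ (fun w => \sum_(i < n) \sum_(j < n) Y i w * Y j w)); last first.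
  by move=> w; rewrite expr2 mulr_suml; apply: eq_bigr => i _; rewrite mulr_sumr.
rewrite Esum_ord; last by move=> i; apply: good_sum => j; apply: goodM; apply: gY.
apply: (@le_trans _ _ (\sum_(i < n) (1:R))); last by rewrite sumr_const card_ord.
apply: ler_sum => i _.
rewrite Esum_ord; last by move=> j; apply: goodM; apply: gY.
rewrite (bigD1 i) //= big1 ?addr0; last first.
  by move=> j ji; apply: EY; rewrite eq_sym.
rewrite -(EC P 1); apply: Ele; [exact: goodM (gY i) (gY i)|exact: goodC|].
move=> w; have /andP[? ?] := Yb i w; nra.
Qed.


Definition S n w := \sum_(i < n) Y i w.

Lemma gS n : good (S n).
Proof. by apply: good_sum => i; apply: gY. Qed.

Definition A (m k : nat) := [set w | ((k.+1 ^ 2)%N)%:R / m.+1%:R <= `|S (k.+1 ^ 2) w|].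

Lemma mA m k : measurable (A m k).
Proof.
have mf : measurable_fun setT (fun w => `|S (k.+1 ^ 2) w|).
  by apply: measurableT_comp; [exact: normr_measurable | exact: (gS _).1].
have := mf measurableT _ (@measurable_itv _ `[((k.+1 ^ 2)%N)%:R / m.+1%:R, +oo[).
rewrite setTI; congr measurable; apply/seteqP; split => w /=;
  by rewrite in_itv /= andbT.
Qed.

Lemma PA m k : (P (A m k) <= ((m.+1%:R ^+ 2) / (k.+1%:R ^+ 2))%:E)%E.
Proof.
rewrite -(E_indic P (mA m k)) lee_fin.
set N := (k.+1 ^ 2)%N.
pose c : R := N%:R / m.+1%:R.
have N0 : 0 < N%:R :> R by rewrite ltr0n expn_gt0.
have M0 : 0 < m.+1%:R :> R by rewrite ltr0n.
have c0 : 0 < c by rewrite divr_gt0.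
have h1 : c ^+ 2 * E P (\1_(A m k)) <= N%:R.
  rewrite -EZ; last exact: good_indic (mA m k).
  apply: le_trans (var_bound N); apply: Ele.
  - by apply: goodM; [exact: goodC|exact: good_indic (mA m k)].
  - by apply: goodM; exact: gS.
  move=> w; rewrite indicE; case: (boolP (w \in A m k)) => h /=.
    have h' : c <= `|S N w| by move/set_mem: h.
    rewrite mulr1 -[(\sum_(i < N) Y i w) ^+ 2]real_normK ?num_real // !expr2.
    by apply: ler_pM => //; exact: ltW.
  by rewrite mulr0 sqr_ge0.
have -> : (m.+1%:R ^+ 2) / (k.+1%:R ^+ 2) = N%:R / c ^+ 2 :> R.
  rewrite /c /N natrX; field.
  by rewrite ?lt0r_neq0 //; apply/andP; split; rewrite lt0r_neq0 // -natrX.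
by rewrite ler_pdivlMr ?exprn_gt0 // mulrC.
Qed.


Lemma mLS m : measurable (lim_sup_set (A m)).
Proof.
apply: bigcap_measurable => // n _; apply: bigcup_measurable => j _; exact: mA.
Qed.

Lemma LS0 m : P (lim_sup_set (A m)) = 0%E.
Proof.
apply: lim_sup_set_cvg0; first exact: mA.
apply: (@series_inv_sq _ (m.+1%:R ^+ 2)); first exact: sqr_ge0.
by move=> k; rewrite measure_ge0 PA.
Qed.

Lemma Yavg : {ae P, forall w, (fun n : nat => n%:R^-1 * \sum_(i < n) Y i w) @ \oo --> 0}.
Proof.
have hN : P.-negligible (\bigcup_m lim_sup_set (A m)).
  apply: negligible_bigcup => m; apply/negligibleP; [exact: mLS|exact: LS0].
apply: (negligibleS _ hN) => w /= hw.
case: (pselect (exists m, lim_sup_set (A m) w)) => [[m hm0]|hnn]; first by exists m.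
exfalso; apply: hw.
have hm m : ~ lim_sup_set (A m) w by move=> h; apply: hnn; exists m.
apply: (@det_avg R (fun i => Y i w)); first by move=> i; rewrite ler_norml; exact: Yb.
move=> m.
have [n hn'] : exists n, ~ (\bigcup_(j in [set j | (n <= j)%N]) A m j) w.
  by apply/existsNP => h; apply: (hm m) => n _; exact: h n.
exists n.+1; case => // k; rewrite ltnS => nk.
have hA : ~ A m k w by move=> h; apply: hn'; exists k.
apply/ltW; rewrite ltNge; apply/negP => h; apply: hA; exact: h.
Qed.


Lemma final : {ae P, forall w, theta^~ w @ \oo --> theta_inf w} ->
  {ae P, forall w,
     (fun n : nat => (n%:R)^-1 * \sum_(i < n) ((X i w == true)%:R : R))
       @ \oo --> theta_inf w}.
Proof.
move=> hconv.
apply: (negligibleS _ (negligibleU Yavg hconv)) => w /= hw.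
case: (pselect ((fun n : nat => n%:R^-1 * \sum_(i < n) Y i w) @ \oo --> 0)) => hY;
  last by left.
case: (pselect (theta^~ w @ \oo --> theta_inf w)) => hC; last by right.
exfalso; apply: hw.
have hT : (fun n : nat => n%:R^-1 * \sum_(i < n) theta i w) @ \oo --> theta_inf w.
  rewrite -cvg_shiftS.
  have e : [sequence n.+1%:R^-1 * \sum_(i < n.+1) theta i w]_n =
           arithmetic_mean (theta^~ w).
    by apply: funext => n; rewrite /arithmetic_mean /series /= big_mkord.
  by rewrite e; exact: cesaro hC.
have e2 : (fun n : nat => n%:R^-1 * \sum_(i < n) ((X i w == true)%:R : R)) =
    (fun n : nat => n%:R^-1 * \sum_(i < n) Y i w) \+
    (fun n : nat => n%:R^-1 * \sum_(i < n) theta i w).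
  apply: funext => n /=.
  rewrite -mulrDr -big_split /=; congr (_ * _); apply: eq_bigr => i _.
  by rewrite /Y /Z subrK.
by rewrite e2 -[theta_inf w]add0r; apply: cvgD.
Qed.

End Main.

Theorem mainTheorem5 (d : measure_display) (T : measurableType d) (R : realType)
  (P : probability T R) (F : nat -> set (set T))
  (theta : nat -> T -> R) (theta_inf : T -> R) (X : nat -> T -> bool) :
  submartingale P F theta ->
  (forall n w, 0 <= theta n w <= 1) ->
  {ae P, forall w, theta^~ w @ \oo --> theta_inf w} ->
  (forall n (b : bool), measurable (X n @^-1` [set b])) ->
  product_disintegration P X
    (fun n w (s : bool) => if s then theta n w else 1 - theta n w) ->
  {ae P, forall w,
     (fun n : nat => (n%:R)^-1 * \sum_(i < n) ((X i w == true)%:R : R))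
       @ \oo --> theta_inf w}.
Proof.
move=> Hsub Hb Hconv HX Hpd.
exact: (@final d T R P F theta theta_inf X Hsub Hb HX Hpd Hconv).
Qed.
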